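(* Let $\kappa$ be a regular cardinal and let $A,B$ be meet-semilattices with $A\subseteq B\subseteq \mathcal{BL} A$, where $A$ is identified with $\{{\downarrow}a:a\in A\}$, $A$ is a sub-meet-semilattice of $B$ and $B$ is a sub-meet-semilattice of $\mathcal{BL} A$. The following are equivalent: (1) $B$ is a $\kappa$-frame; (2) $B$ is a sub-$\kappa$-frame of $\mathcal{BL} A$ (i.e., closed under finite meets and under joins of fewer than $\kappa$ elements computed in $\mathcal{BL} A$); (3) the sub-$\kappa$-frame of $\mathcal{BL} A$ generated by $B$ equals $B$.
   Context: A meet-semilattice is a poset with all finite meets. For $S\subseteq A$ with $\bigvee S$ existing in $A$, the join is distributive if $a\wedge\bigvee S=\bigvee\{a\wedge s:s\in S\}$ for all $a\in A$. A D-ideal is a downset $E$ with $\bigvee S\in E$ whenever $S\subseteq E$ has a distributive join; $\mathcal{BL} A$ is the frame of D-ideals of $A$ ordered by inclusion, into which $A$ embeds via $a\mapsto{\downarrow}a$. For a regular cardinal $\kappa$, a $\kappa$-set is a set of cardinality $<\kappa$ and a $\kappa$-join is a join of a $\kappa$-set. A meet-semilattice is $\kappa$-complete if all $\kappa$-joins exist, $\kappa$JD if every existing $\kappa$-join is distributive, and a $\kappa$-frame if it is both $\kappa$-complete and $\kappa$JD. *)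

(* Defs.v *)
From mathcomp Require Import all_boot all_order.
Import Order.Theory.
Set Implicit Arguments.
Unset Strict Implicit.

(* cardinal kappa represented by a type K: S is a kappa-set iff |S| < |K|,
   i.e. there is no injection of K into S *)
Definition small {X : Type} (K : Type) (S : X -> Prop) : Prop :=
  ~ exists f : K -> X, injective f /\ forall k, S (f k).

Section Generic.
Variables (X : Type) (P : X -> Prop) (le : X -> X -> Prop).

Definition is_join (S : X -> Prop) (j : X) : Prop :=
  P j /\ (forall s, S s -> le s j) /\
  (forall y, P y -> (forall s, S s -> le s y) -> le j y).

Definition is_meet (S : X -> Prop) (m : X) : Prop :=
  P m /\ (forall s, S s -> le m s) /\
  (forall y, P y -> (forall s, S s -> le y s) -> le y m).

Definition pair2 (a b : X) : X -> Prop := fun x => x = a \/ x = b.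

Definition distributive_join (S : X -> Prop) (j : X) : Prop :=
  is_join S j /\
  forall a m, P a -> is_meet (pair2 a j) m ->
    is_join (fun t => exists s, S s /\ is_meet (pair2 a s) t) m.

Definition kappa_complete (K : Type) : Prop :=
  forall S, (forall s, S s -> P s) -> small K S -> exists j, is_join S j.

Definition kappa_JD (K : Type) : Prop :=
  forall S j, (forall s, S s -> P s) -> small K S -> is_join S j ->
    distributive_join S j.

Definition kappa_frame (K : Type) : Prop := kappa_complete K /\ kappa_JD K.

End Generic.

(* K represents an infinite regular cardinal: a union of fewer than kappa
   sets, each of size < kappa, has size < kappa. *)
Definition regular_cardinal (K : Type) : Prop :=
  (exists f : nat -> K, injective f) /\
  forall (I T : Type) (J : I -> Prop) (F : I -> T -> Prop),
    small K J -> (forall i, J i -> small K (F i)) ->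
    small K (fun t => exists i, J i /\ F i t).

Section Ideals.
Variables (d : Order.disp_t) (A : tMeetSemilatticeType d).

Definition leA : A -> A -> Prop := fun x y => (x <= y)%O.
Definition allA : A -> Prop := fun _ => True.

Definition down (a : A) : A -> Prop := fun x => (x <= a)%O.

Definition D_ideal (E : A -> Prop) : Prop :=
  (forall x y, (y <= x)%O -> E x -> E y) /\
  (forall S j, (forall s, S s -> E s) -> distributive_join allA leA S j -> E j).

Definition incl (E F : A -> Prop) : Prop := forall x, E x -> F x.

Definition meet_closed (Q : (A -> Prop) -> Prop) : Prop :=
  Q (fun _ => True) /\ (forall E F, Q E -> Q F -> Q (fun x => E x /\ F x)).

Definition sub_kappa_frame (K : Type) (Q : (A -> Prop) -> Prop) : Prop :=
  (forall E, Q E -> D_ideal E) /\ meet_closed Q /\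
  (forall S j, (forall E, S E -> Q E) -> small K S ->
     is_join D_ideal incl S j -> Q j).

Definition generated_sub_kappa_frame (K : Type) (B : (A -> Prop) -> Prop)
  : (A -> Prop) -> Prop :=
  fun E => forall Q, sub_kappa_frame K Q -> (forall F, B F -> Q F) -> Q E.

End Ideals.

(* Main.v *)
From Pilot Require Import Defs.
From mathcomp Require Import all_boot all_order.
From Stdlib Require Import FunctionalExtensionality PropExtensionality.
Import Order.Theory.
Local Open Scope order_scope.

Lemma pred_ext {T : Type} (E F : T -> Prop) : (forall x, E x <-> F x) -> E = F.
Proof.
move=> h; apply: functional_extensionality => x; apply: propositional_extensionality; exact: h.
Qed.

Lemma join_ext {X : Type} (P : X -> Prop) le (S S' : X -> Prop) j :
  (forall x, S x <-> S' x) -> is_join P le S j -> is_join P le S' j.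
Proof.
move=> h [Pj [ub lub]]; split=> //; split.
- by move=> s /h; apply: ub.
- by move=> y Py H; apply: lub => // s /h; apply: H.
Qed.

Arguments join_ext {X P le S S' j}.

Section Aux.
Variables (d : Order.disp_t) (A : tMeetSemilatticeType d).

Lemma meet_of (u v : A) : is_meet (@allA d A) (@leA d A) (pair2 u v) (u `&` v).
Proof.
split=> //; split.
- by move=> s [->|->]; rewrite /leA ?leIl ?leIr.
- by move=> y _ H; rewrite /leA lexI (H u (or_introl erefl)) (H v (or_intror erefl)).
Qed.

Lemma meet_eq (u v m : A) : is_meet (@allA d A) (@leA d A) (pair2 u v) m -> m = u `&` v.
Proof.
move=> [_ [lb glb]]; apply: le_anti; apply/andP; split.
- by rewrite lexI (lb u (or_introl erefl)) (lb v (or_intror erefl)).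
- by apply: glb => // s [->|->]; rewrite /leA ?leIl ?leIr.
Qed.

Lemma down_of (E : A -> Prop) x y : D_ideal E -> y <= x -> E x -> E y.
Proof. by move=> [h _]; apply: h. Qed.

Arguments down_of {E x y}.
Arguments meet_eq {u v m}.
Arguments meet_of : clear implicits.

Definition bljoin (S : (A -> Prop) -> Prop) : A -> Prop :=
  fun x => forall E, D_ideal E -> (forall s, S s -> incl s E) -> E x.

Lemma bljoin_is (S : (A -> Prop) -> Prop) : is_join (@D_ideal d A) (@incl d A) S (bljoin S).
Proof.
split; [split|split].
- by move=> x y le hx E dE h; apply: (down_of dE le); apply: hx.
- by move=> T j hT hj E dE h; case: (dE) => [_ c]; apply: (c T j) => // s /hT => /(_ E dE h).
- by move=> s Ss x sx E dE h; apply: (h s).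
- by move=> y dy h x hx; apply: hx.
Qed.

Lemma key (B : (A -> Prop) -> Prop) (hAB : forall a : A, B (down a))
  (hBBL : forall E, B E -> D_ideal E) S j E :
  (forall s, S s -> B s) -> distributive_join B (@incl d A) S j ->
  (forall s, S s -> incl s E) -> D_ideal E -> incl j E.
Proof.
move=> SB [[Bj [ubj lubj]] dist] SE dE.
have dj := hBBL _ Bj.
pose U (y : A) := fun v : A => v <= y /\ exists s, S s /\ s v.
have C : forall y, j y -> is_join (@allA d A) (@leA d A) (U y) y.
  move=> y jy.
  have mt : is_meet B (@incl d A) (pair2 (down y) j) (down y).
    split; first exact: hAB; split.
    - move=> s [->|->] x //. by move=> hx; apply: (down_of dj hx).
    - by move=> z _ H; apply: H; left.
  have [_ [_ lubT]] := dist (down y) (down y) (hAB y) mt.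
  split=> //; split; first by move=> v [].
  move=> z _ H.
  have : incl (down y) (down z).
    apply: lubT; first exact: hAB.
    move=> t [s [Ss [_ [lbt _]]]] x tx.
    apply: H; split; first exact: (lbt _ (or_introl erefl) x tx).
    by exists s; split=> //; apply: (lbt _ (or_intror erefl) x tx).
  by move=> /(_ y); apply; rewrite /down.
move=> y jy.
case: dE => [_ cE].
apply: (cE (U y) y).
  by move=> v [_ [s [Ss sv]]]; apply: (SE s).
split; first exact: C.
move=> w m _ hm.
have mle : m <= y by case: hm => [_ [lb _]]; apply: lb; right.
have jm : j m := down_of dj mle jy.
apply: (join_ext _ (C m jm)) => t; split.
- move=> [tm [s [Ss st]]]; exists t; split.
    split; first exact: (le_trans tm mle). by exists s.
  rewrite (meet_eq hm) in tm.
  have ht : t = w `&` t.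
    by apply/eqP; rewrite eq_le leIr lexI (le_trans tm (leIl _ _)) lexx.
  by rewrite [X in is_meet _ _ _ X]ht; apply: meet_of.
- move=> [u [[uy [s [Ss su]]] hmt]].
  rewrite (meet_eq hmt) (meet_eq hm); split.
    by rewrite lexI leIl (le_trans (leIr _ _) uy).
  exists s; split=> //; apply: (down_of (hBBL _ (SB _ Ss)) (leIr _ _) su).
Qed.

Lemma frame_dist (S : (A -> Prop) -> Prop) (a y j0 : A -> Prop) :
  (forall s, S s -> D_ideal s) -> D_ideal a -> D_ideal y ->
  (forall F, D_ideal F -> (forall s, S s -> incl s F) -> incl j0 F) ->
  (forall s, S s -> incl (fun x => a x /\ s x) y) ->
  incl (fun x => a x /\ j0 x) y.
Proof.
move=> SD da dy hj0 H.
pose E := fun x : A => forall b, a b -> y (x `&` b).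
have dE : D_ideal E.
  split.
  - move=> x x' le Ex b ab; apply: (down_of dy _ (Ex b ab)).
    by rewrite leI2 ?lexx.
  - move=> D jj DE [[_ [ubjj lubjj]] dist] b ab.
    rewrite meetC.
    case: dy => [_ cy].
    apply: (cy (fun t => exists s, D s /\ is_meet (@allA d A) (@leA d A) (pair2 b s) t)).
      move=> t [s [Ds ht]]; rewrite (meet_eq ht) meetC; exact: DE.
    split; first by apply: dist => //; apply: meet_of.
    move=> x m' _ hm'.
    have hm'' : is_meet (@allA d A) (@leA d A) (pair2 (x `&` b) jj) m'.
      by rewrite (meet_eq hm') meetA; apply: meet_of.
    apply: (join_ext _ (dist (x `&` b) m' I hm'')) => t; split.
    + move=> [s [Ds ht]]; exists (b `&` s); split.
        by exists s; split=> //; apply: meet_of.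
      by rewrite (meet_eq ht) -meetA; apply: meet_of.
    + move=> [t' [[s [Ds ht']] ht]]; exists s; split=> //.
      by rewrite (meet_eq ht) (meet_eq ht') meetA; apply: meet_of.
have j0E : incl j0 E.
  apply: hj0 => // s Ss x sx b ab; apply: (H s Ss); split.
  - by apply: (down_of da _ ab); rewrite leIr.
  - by apply: (down_of (SD s Ss) _ sx); rewrite leIl.
by move=> x [ax jx]; have := j0E x jx x ax; rewrite meetxx.
Qed.

End Aux.
Arguments key {d A B} hAB hBBL {S j E}.
Arguments frame_dist {d A S a y j0}.

Import Pilot.Defs.

Theorem theorem3p7 (K : Type) (hK : regular_cardinal K)
  (d : Order.disp_t) (A : tMeetSemilatticeType d)
  (B : (A -> Prop) -> Prop)
  (hAB : forall a : A, B (down a))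
  (hBBL : forall E, B E -> D_ideal E)
  (hBmeet : meet_closed B) :
  (kappa_frame B (@incl d A) K <-> sub_kappa_frame K B) /\
  (sub_kappa_frame K B <-> generated_sub_kappa_frame K B = B).
Proof.
split; split.
- move=> [kc kjd]; split=> //; split=> // S j0 SB sm hj0.
  have [j hj] := kc S SB sm.
  have dj := kjd S j SB sm hj.
  have e : j = j0.
    apply: pred_ext => x; split.
    + move: x; apply: (key hAB hBBL SB dj); first by case: hj0 => [_ []].
      by case: hj0.
    + move: x; case: hj0 => [_ [_ l]]; apply: l; first by apply: hBBL; case: hj.
      by case: hj => [_ []].
  by rewrite -e; case: hj.
- move=> [_ [_ cl]].
  have BS : forall S, (forall s, S s -> B s) -> small K S -> B (@bljoin d A S).
    by move=> S SB sm; apply: (cl S) => //; apply: (@bljoin_is d A).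
  split.
  + move=> S SB sm; exists (@bljoin d A S); split; first exact: BS.
    have [_ [u l]] := @bljoin_is d A S; split=> //.
    by move=> y By; apply: l; apply: hBBL.
  + move=> S j SB sm hj; split=> //.
    have Bj0 := BS S SB sm.
    have [_ [u0 l0]] := @bljoin_is d A S.
    have jj0 : incl j (@bljoin d A S) by case: hj => [_ [_ l]]; apply: l.
    move=> a m Ba hm; split; first by case: hm.
    split.
    * move=> t [s [Ss [Bt [lb _]]]].
      case: hm => [_ [_ g]]; apply: g => // z [->|->].
      -- exact: lb (or_introl erefl).
      -- move=> x tx; case: hj => [_ [uj _]]; apply: (uj s Ss).
         exact: lb (or_intror erefl) x tx.
    * move=> y By H x mx.
      have [_ [lbm _]] := hm.
      refine (@frame_dist d A S a y (@bljoin d A S) _ (hBBL _ Ba) (hBBL _ By) _ _ x _).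
      -- by move=> s /SB; apply: hBBL.
      -- by move=> F dF h; apply: l0.
      -- move=> s Ss; apply: H; exists s; split=> //.
         split; first by case: hBmeet => [_ mc]; apply: mc => //; apply: SB.
         split; first by move=> z [->|->] w [].
         by move=> z _ h w zw; split; [apply: (h a (or_introl erefl)) | apply: (h s (or_intror erefl))].
      -- split; first exact: lbm (or_introl erefl) x mx.
         by apply: jj0; apply: lbm (or_intror erefl) x mx.
- move=> hs; apply: functional_extensionality => E.
  apply: propositional_extensionality; split.
  + by move=> h; apply: h.
  + by move=> BE Q _ h; apply: h.
- move=> e.
  have subD : sub_kappa_frame K (@D_ideal d A).
    split=> //; split.
    + split.
      * by split.
      * move=> E F [dE cE] [dF cF]; split.
        -- by move=> x y le [Ex Fx]; split; [apply: (dE x) | apply: (dF x)].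
        -- move=> S0 j SEF dj; split; [apply: (cE S0) | apply: (cF S0)] => // s /SEF [h1 h2] //.
    + by move=> S0 j _ _ [].
  have G : sub_kappa_frame K (generated_sub_kappa_frame K B).
    split; [|split; [split|]].
    + by move=> E g; apply: (g _ subD).
    + by move=> Q [_ [[t _] _]].
    + by move=> E F gE gF Q hQ hBQ; case: (hQ) => [_ [[_ i] _]]; apply: i; [apply: gE | apply: gF].
    + move=> S j SG sm hj Q hQ hBQ; case: (hQ) => [hQ1 [hQ2 c]]; apply: (c S) => //.
      by move=> E /SG; apply.
  by rewrite e in G.
Qed.
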